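(* The sets $\mathsf{M}^s\cap\mathsf{M}^n$ (of Epstein models) and $\mathsf{R}^s\cap\mathsf{R}^n$ (of Epstein relations) are undefinable.
   Context: Language: propositional letters $\Phi=\{p_0,p_1,\dots\}$; connectives $\neg$, $\lor,\wedge,\to,\leftrightarrow,\vartriangle,\looparrowright$; $\mathsf{FOR}$ the set of all formulas. An Epstein model is $\langle v,\mathfrak{R}\rangle$ with $v:\Phi\to\{0,1\}$ and $\mathfrak{R}\subseteq\mathsf{FOR}^2$ (an Epstein relation); truth: letters via $v$, boolean connectives classical, $\langle v,\mathfrak{R}\rangle\vDash\varphi\vartriangle\psi$ iff both true and $\langle\varphi,\psi\rangle\in\mathfrak{R}$; $\langle v,\mathfrak{R}\rangle\vDash\varphi\looparrowright\psi$ iff $\varphi\to\psi$ true and $\langle\varphi,\psi\rangle\in\mathfrak{R}$. $\mathfrak{R}\vDash\varphi$ iff true under every valuation. $\mathsf{R}^s$: symmetric relations; $\mathsf{R}^n$: relations $\mathfrak{R}$ with $\langle\neg\varphi,\psi\rangle\in\mathfrak{R}\Rightarrow\langle\varphi,\psi\rangle\in\mathfrak{R}$ for all $\varphi,\psi$; $\mathsf{M}^s$, $\mathsf{M}^n$: all models $\langle v,\mathfrak{R}\rangle$ with $\mathfrak{R}\in\mathsf{R}^s$, resp. $\mathfrak{R}\in\mathsf{R}^n$. A set $\mathsf{K}$ of relations (resp. models) is definable iff there is $\Gamma\subseteq\mathsf{FOR}$ such that for every relation $\mathfrak{R}$ (resp. model $\mathfrak{M}$): $\Gamma$ is valid on $\mathfrak{R}$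 (resp. true in $\mathfrak{M}$) iff it belongs to $\mathsf{K}$. *)

(* Defs.v *)
Inductive form : Type :=
| Var : nat -> form
| Neg : form -> form
| Or : form -> form -> form
| And : form -> form -> form
| Imp : form -> form -> form
| Iff : form -> form -> form
| Tri : form -> form -> form
| Loop : form -> form -> form.

Definition valuation := nat -> bool.
Definition erel := form -> form -> Prop.

Fixpoint sat (v : valuation) (R : erel) (f : form) : Prop :=
  match f with
  | Var n => v n = true
  | Neg a => ~ sat v R a
  | Or a b => sat v R a \/ sat v R b
  | And a b => sat v R a /\ sat v R b
  | Imp a b => sat v R a -> sat v R b
  | Iff a b => (sat v R a <-> sat v R b)
  | Tri a b => (sat v R a /\ sat v R b) /\ R a b
  | Loop a b => (sat v R a -> sat v R b) /\ R a b
  end.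

Definition valid (R : erel) (f : form) : Prop := forall v, sat v R f.

Definition sym_rel (R : erel) : Prop := forall a b, R a b -> R b a.

Definition neg_rel (R : erel) : Prop := forall a b, R (Neg a) b -> R a b.

Definition definable_rel (K : erel -> Prop) : Prop :=
  exists Gamma : form -> Prop,
    forall R : erel, (forall f, Gamma f -> valid R f) <-> K R.

Definition definable_model (K : valuation -> erel -> Prop) : Prop :=
  exists Gamma : form -> Prop,
    forall (v : valuation) (R : erel), (forall f, Gamma f -> sat v R f) <-> K v R.

(* Main.v *)
Require Import Defs.

Definition A0 : form := Imp (Var 0) (Var 0).
Definition Rfull : erel := fun _ _ => True.
Definition R2 : erel := fun x y => ~ (x = A0 /\ y = Neg A0).

Lemma sat_eq : forall v f, sat v Rfull f <-> sat v R2 f.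
Proof.
  intros v f; induction f as [n|a IH|a IHa b IHb|a IHa b IHb|a IHa b IHb|a IHa b IHb|a IHa b IHb|a IHa b IHb];
    simpl; try tauto.
  - split.
    + intros [[Ha Hb] _]. split; [tauto|]. intros [E1 E2]; subst. simpl in Hb.
      apply Hb; tauto.
    + unfold Rfull; tauto.
  - split.
    + intros [H _]. split; [tauto|]. intros [E1 E2]; subst. simpl in H.
      apply H; tauto.
    + unfold Rfull; tauto.
Qed.

Lemma Rfull_K : sym_rel Rfull /\ neg_rel Rfull.
Proof. split; intros a b _; exact I. Qed.

Lemma R2_not_sym : ~ sym_rel R2.
Proof.
  intros H. apply (H (Neg A0) A0).
  - intros [E _]; discriminate.
  - split; reflexivity.
Qed.

Theorem mainTheorem13 :
  ~ definable_model (fun (_ : valuation) (R : erel) => sym_rel R /\ neg_rel R) /\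
  ~ definable_rel (fun R : erel => sym_rel R /\ neg_rel R).
Proof.
  split.
  - intros [G HG].
    assert (H1 := proj2 (HG (fun _ => true) Rfull) Rfull_K).
    assert (H2 : forall f, G f -> sat (fun _ => true) R2 f).
    { intros f Hf. apply sat_eq. auto. }
    apply R2_not_sym. apply (proj1 (HG _ R2) H2).
  - intros [G HG].
    assert (H1 := proj2 (HG Rfull) Rfull_K).
    assert (H2 : forall f, G f -> valid R2 f).
    { intros f Hf v. apply sat_eq. apply H1; auto. }
    apply R2_not_sym. apply (proj1 (HG R2) H2).
Qed.
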